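(* Let $\Gamma\cong\mathbb{Z}^n$ act freely, properly discontinuously and cocompactly by isometries on a length space $(X,d)$, let $x_0\in X$, and let $D\ge\operatorname{diam}(\Gamma\backslash X)$. Let $\Sigma_D=\{\gamma\in\Gamma\setminus\{e\}: d(\gamma x_0,x_0)\le 3D\}$ (a generating set of $\Gamma$), let $\Sigma_n=\{\gamma_1,\dots,\gamma_n\}\subset\Sigma_D$ be $n$ linearly independent elements, and $\mathcal Z=\langle\Sigma_n\rangle$. Let $S=\{s_0=e,s_1,\dots,s_d\}$ be a set of representatives of the cosets of $\Gamma/\mathcal Z$, each of minimal $d_{\Sigma_D}$-word length in its coset, and let $\widehat\Sigma_n=\{s_i\sigma s_j^{-1}: s_i,s_j\in S,\ \sigma\in\Sigma_D,\ s_i\sigma s_j^{-1}\in\mathcal Z\setminus\{e\}\}$. Then for all $\gamma\in\mathcal Z$, $$|\gamma|_{\widehat\Sigma_n}\le|\gamma|_{\Sigma_D}\le(2[\Gamma:\mathcal Z]+1)\,|\gamma|_{\widehat\Sigma_n}.$$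
   Context: For a generating set $\Sigma$ of a group, $|\gamma|_\Sigma$ denotes the word length of $\gamma$ with respect to $\Sigma$ and $d_\Sigma$ the associated word metric; $|\gamma|_{\widehat\Sigma_n}$ is the word length in $\mathcal Z$ with respect to $\widehat\Sigma_n$ (which generates $\mathcal Z$). *)

(* Defs.v *)
From HB Require Import structures.
From mathcomp Require Import all_boot all_order all_algebra.
From mathcomp Require Import reals.
Set Implicit Arguments. Unset Strict Implicit. Unset Printing Implicit Defensive.
Import Order.TTheory GRing.Theory Num.Theory.
Local Open Scope ring_scope.

Section Defs.
Variable R : realType.
Variable X : Type.
Variable d : X -> X -> R.

Definition is_metric : Prop :=
  [/\ forall x y, 0 <= d x y,
      forall x y, d x y = 0 <-> x = y,
      forall x y, d x y = d y x &
      forall x y z, d x z <= d x y + d y z].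

Definition curve_continuous (c : R -> X) : Prop :=
  forall t, 0 <= t <= 1 -> forall e : R, 0 < e -> exists2 del : R, 0 < del &
    forall s, 0 <= s <= 1 -> `|s - t| < del -> d (c s) (c t) < e.

Definition curve_length_le (c : R -> X) (L : R) : Prop :=
  forall ts : seq R, sorted <=%R ts -> (forall t, t \in ts -> 0 <= t <= 1) ->
    \sum_(i < (size ts).-1) d (c (nth 0 ts i)) (c (nth 0 ts i.+1)) <= L.

Definition length_space : Prop :=
  is_metric /\
  forall x y (e : R), 0 < e -> exists c : R -> X,
    [/\ curve_continuous c, c 0 = x, c 1 = y & curve_length_le c (d x y + e)].

(** sequential compactness of K (equivalent to compactness in a metric space) *)
Definition seq_compact (K : X -> Prop) : Prop :=
  forall u : nat -> X, (forall k, K (u k)) ->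
    exists phi : nat -> nat, exists2 y, K y &
      (forall k, (phi k < phi k.+1)%N) /\
      forall e : R, 0 < e -> exists N, forall k, (N <= k)%N -> d (u (phi k)) y < e.

Variable n : nat.
Notation G := 'rV[int]_n.
Variable act : G -> X -> X.

Definition isometric_action : Prop :=
  [/\ forall x, act 0 x = x,
      forall g h x, act (g + h) x = act g (act h x) &
      forall g x y, d (act g x) (act g y) = d x y].

Definition free_action : Prop := forall g x, act g x = x -> g = 0.

(** properly discontinuous: every point has a ball B(x,r) such that only
    finitely many g satisfy g B(x,r) /\ B(x,r) <> empty *)
Definition properly_discontinuous : Prop :=
  forall x, exists2 r : R, 0 < r & exists fin : seq G,
    forall g, (exists y, d y x < r /\ d (act g y) x < r) -> g \in fin.

Definition cocompact : Prop :=
  exists K : X -> Prop, seq_compact K /\ forall x, exists g, K (act g x).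

(** D >= diam(G\X) = sup_{x,y} inf_g d(x, g y) *)
Definition quotient_diam_le (D : R) : Prop :=
  forall x y (e : R), 0 < e -> exists g, d x (act g y) <= D + e.

End Defs.

Section Words.
Variable n : nat.
Notation G := 'rV[int]_n.

(** |g|_P <= k : g is a product (sum) of at most k letters from P \cup P^{-1} *)
Definition wordlen_le (P : G -> Prop) (g : G) (k : nat) : Prop :=
  exists w : seq G, [/\ (size w <= k)%N,
    forall x, x \in w -> P x \/ P (- x) & \sum_(x <- w) x = g].

Definition in_span (gam : 'I_n -> G) (v : G) : Prop :=
  exists c : 'I_n -> int, v = \sum_i c i *: gam i.

Definition lin_indep (gam : 'I_n -> G) : Prop :=
  forall c : 'I_n -> int, \sum_i c i *: gam i = 0 -> forall i, c i = 0.

Definition coset_reps (gam : 'I_n -> G) (S : seq G) : Prop :=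
  [/\ uniq S,
      forall s t, s \in S -> t \in S -> in_span gam (s - t) -> s = t &
      forall g, exists2 s, s \in S & in_span gam (g - s)].
End Words.

(* Main.v *)
Require Import Defs.
From mathcomp Require Import all_boot all_order all_algebra.
From mathcomp Require Import classical_sets boolp reals.
From mathcomp Require Import lra zify.
From Stdlib Require Import ClassicalEpsilon.
Import Order.TTheory GRing.Theory Num.Theory.
Set Implicit Arguments. Unset Strict Implicit.
Local Open Scope ring_scope.

Section W.
Variable n : nat.
Notation G := 'rV[int]_n.
Variable P : G -> Prop.

Lemma wl_mono g k k' : (k <= k')%N -> wordlen_le P g k -> wordlen_le P g k'.
Proof. move=> kk [w [h1 h2 h3]]; exists w; split=> //; exact: leq_trans kk. Qed.

Lemma wl0 : wordlen_le P 0 0.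
Proof. exists [::]; split=> //; by rewrite big_nil. Qed.

Lemma wl_add a b k k' : wordlen_le P a k -> wordlen_le P b k' -> wordlen_le P (a + b) (k + k').
Proof.
move=> [w [h1 h2 h3]] [w' [h1' h2' h3']]; exists (w ++ w'); split.
- by rewrite size_cat leq_add.
- by move=> x; rewrite mem_cat => /orP[/h2|/h2'].
- by rewrite big_cat /= h3 h3'.
Qed.

Lemma wl_opp a k : wordlen_le P a k -> wordlen_le P (- a) k.
Proof.
move=> [w [h1 h2 h3]]; exists (map -%R w); split.
- by rewrite size_map.
- move=> x /mapP[y /h2 Hy ->]; rewrite opprK; tauto.
- by rewrite big_map -h3 sumrN.
Qed.

Lemma wl_letter x : P x \/ P (- x) -> wordlen_le P x 1.
Proof. move=> h; exists [:: x]; split=> //; first by move=> y; rewrite inE => /eqP->.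
by rewrite big_seq1. Qed.

Lemma wl_sum m (w : seq G) : (forall x, x \in w -> wordlen_le P x m) ->
  wordlen_le P (\sum_(x <- w) x) (m * size w).
Proof.
elim: w => [|x w IH] h; first by rewrite big_nil muln0; exact: wl0.
rewrite big_cons /= mulnS; apply: wl_add; first by apply: h; rewrite inE eqxx.
by apply: IH => y hy; apply: h; rewrite inE hy orbT.
Qed.
End W.
Lemma zm (V : zmodType) (a b x y : V) : x - y = (a - b) - (a - x) + (b - y).
Proof.
rewrite opprB [a - b + _]addrC [x - a + _]addrA subrK -addrA [- b + _]addrA addNr add0r //.
Qed.

Section Span.
Variable n : nat.
Notation G := 'rV[int]_n.
Variable gam : 'I_n -> G.

Lemma span0 : in_span gam 0.
Proof. exists (fun _ => 0); by rewrite big1 // => i _; rewrite scale0r. Qed.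

Lemma spanD a b : in_span gam a -> in_span gam b -> in_span gam (a + b).
Proof.
move=> [c ->] [c' ->]; exists (fun i => c i + c' i).
by rewrite -big_split /=; apply: eq_bigr => i _; rewrite scalerDl.
Qed.

Lemma spanN a : in_span gam a -> in_span gam (- a).
Proof.
move=> [c ->]; exists (fun i => - c i).
by rewrite -sumrN; apply: eq_bigr => i _; rewrite scaleNr.
Qed.

Lemma spanB a b : in_span gam a -> in_span gam b -> in_span gam (a - b).
Proof. by move=> ha hb; apply: spanD => //; apply: spanN. Qed.

Definition rep (S : seq G) (H : forall g, exists s, s \in S /\ in_span gam (g - s)) (g : G) : G :=
  proj1_sig (constructive_indefinite_description _ (H g)).

Lemma cr_ex (S : seq G) : coset_reps gam S -> forall g, exists s, s \in S /\ in_span gam (g - s).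
Proof. by case=> _ _ h g; have [s ??] := h g; exists s. Qed.

Lemma rep_spec S H g : @rep S H g \in S /\ in_span gam (g - rep H g).
Proof. exact: (proj2_sig (constructive_indefinite_description _ (H g))). Qed.

Lemma rep_eq S (cr : coset_reps gam S) H a b : in_span gam (a - b) -> @rep S H a = rep H b.
Proof.
move=> hab; case: cr => _ hu _; have [ha sa] := rep_spec H a; have [hb sb] := rep_spec H b.
apply: hu => //.
have -> : rep H a - rep H b = (a - b) - (a - rep H a) + (b - rep H b).
  exact: zm.
by apply: spanD => //; apply: spanB.
Qed.

Lemma rep_S S (cr : coset_reps gam S) H s : s \in S -> @rep S H s = s.
Proof.
move=> hs; case: cr => _ hu _; have [ha sa] := rep_spec H s.
apply: hu => //; rewrite -opprB; exact: spanN.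
Qed.
End Span.
Lemma id1 (V : zmodType) (t x s r t' : V) : t + (x + s) - r = (t + x - t') + (t' + s - r).
Proof. symmetry. rewrite addrA [_ + (t' + s)]addrA subrK !addrA //. Qed.
Lemma id2 (V : zmodType) (t x s t' : V) : (t + (x + s)) - (t' + s) = t + x - t'.
Proof. by rewrite opprD !addrA addrAC addrK. Qed.
Lemma id3 (V : zmodType) (t x t' : V) : -(t + x - t') = t' + (- x) - t.
Proof. by rewrite !opprD opprK addrC addrA addrAC. Qed.
Lemma id5 (V : zmodType) (a b r : V) : (a - r) - (b - r) = a - b.
Proof. by rewrite opprB addrA subrK. Qed.

Section P.
Variable n : nat.
Notation G := 'rV[int]_n.
Variable gam : 'I_n -> G.

Lemma part1 S (cr : coset_reps gam S) H (P : G -> Prop) (w : seq G) :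
  (forall x, x \in w -> P x \/ P (-x)) -> forall t, t \in S ->
  wordlen_le (fun v => exists si, exists sj, exists sig,
      [/\ si \in S, sj \in S, P sig & v = si + sig - sj] /\ (in_span gam v /\ v != 0))
   (t + \sum_(x <- w) x - @rep n gam S H (t + \sum_(x <- w) x)) (size w).
Proof.
elim: w => [|x w IH] hw t tS.
  by rewrite big_nil addr0 (rep_S cr) // subrr; exists [::]; split=> //; rewrite big_nil.
have [t'S spt'] := rep_spec H (t + x).
set t' := rep H (t + x) in t'S spt'.
rewrite big_cons (id1 _ _ _ _ t').
have -> : rep H (t + (x + \sum_(y <- w) y)) = rep H (t' + \sum_(y <- w) y).
  by apply: (rep_eq cr); rewrite id2.
change (size (x :: w)) with (1 + size w)%N; apply: wl_add; last first.
  by apply: IH => // y hy; apply: hw; rewrite inE hy orbT.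
have [->|nz] := eqVneq (t + x - t') 0; first by exists [::]; split=> //; rewrite big_nil.
apply: wl_letter.
have [hx|hx] := hw x (mem_head _ _).
  by left; exists t, t', x; split.
right; exists t', t, (- x); rewrite id3; split=> //; split=> //.
  by rewrite -id3; exact: spanN.
by rewrite -id3 oppr_eq0.
Qed.

Lemma bound S (cr : coset_reps gam S) (H : forall g : G, exists s, s \in S /\ in_span gam (g - s)) (P : G -> Prop)
  (mn : forall s, s \in S -> forall g, in_span gam (g - s) ->
     forall k, wordlen_le P g k -> wordlen_le P s k) :
  forall k s, s \in S -> wordlen_le P s k -> wordlen_le P s (size S).
Proof.
elim/ltn_ind => k IH s sS [w [hw hP hs]].
case: (leqP (size w) (size S)) => hle; first by exists w; split.
pose L := [seq @rep n gam S H (\sum_(x <- take i w) x) | i <- iota 0 (size w).+1].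
have : ~~ uniq L.
  apply/negP => uL.
  have sub : {subset L <= S} by move=> y /mapP[i _ ->]; exact: (rep_spec H _).1.
  have := uniq_leq_size uL sub; rewrite size_map size_iota. move=> hh; have := ltn_trans hh hle; by rewrite ltnn.
move/(uniqPn 0) => [i [j [ij jL eqn]]].
rewrite size_map size_iota in jL.
have iL : (i < (size w).+1)%N by apply: ltn_trans ij jL.
rewrite !(nth_map 0%N) ?size_iota // !nth_iota // !add0n in eqn.
set w' := take i w ++ drop j w.
have hw' : (size w' < k)%N.
  rewrite /w' size_cat size_takel ?size_drop; last by rewrite -ltnS.
  apply: (leq_trans _ hw); lia.
have spw : in_span gam (\sum_(x <- w') x - s).
  rewrite -hs -(cat_take_drop j w) /w' !big_cat /=.
  rewrite opprD !addrA addrAC addrK.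
  have [_ s1] := rep_spec H (\sum_(x <- take i w) x).
  have [_ s2] := rep_spec H (\sum_(x <- take j w) x).
  rewrite eqn in s1; have := spanB s1 s2; by rewrite id5.
apply: (IH _ hw' s sS); apply: (mn s sS _ spw); exists w'; split=> //.
move=> x; rewrite mem_cat => /orP[/mem_take|/mem_drop]; exact: hP.
Qed.
End P.
Local Open Scope classical_set_scope.
Lemma gen (R : realType) (X : Type) (d : X -> X -> R) (n : nat)
    (act : 'rV[int]_n -> X -> X) (x0 : X) (D : R) :
  length_space d -> isometric_action d act -> quotient_diam_le d act D -> 0 < D ->
  forall g, exists k, wordlen_le (fun g : 'rV[int]_n => g != 0 /\ d (act g x0) x0 <= 3 * D) g k.
Proof.
move=> [[d0 dE dC dT] Hc] [a0 aD aI] Hq D0.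
set P := (fun g : 'rV[int]_n => _).
have step : forall g g', d (act g x0) (act g' x0) <= 3 * D ->
    (exists k, wordlen_le P g k) -> exists k, wordlen_le P g' k.
  move=> g g' hd [k hk].
  have -> : g' = g + (g' - g) by rewrite addrC subrK.
  have [->|hz] := eqVneq (g' - g) 0; first by rewrite addr0; exists k.
  exists (k + 1)%N; apply: wl_add => //; apply: wl_letter; left; split=> //.
  by rewrite -(aI g) -aD addrC subrK dC.
pose Rp y := exists g, d y (act g x0) <= D + D / 4 /\ exists k, wordlen_le P g k.
have prop : forall y y', Rp y -> d y y' < D / 2 -> Rp y'.
  move=> y y' [g [hg fg]] hyy.
  have [g' hg'] := Hq y' x0 (D / 4) ltac:(by rewrite divr_gt0).
  exists g'; split=> //; apply: step fg.
  apply: (le_trans (dT _ y _)); rewrite dC.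
  apply: (le_trans (lerD (lexx _) (dT _ y' _))).
  have := ltW hyy; lra.
move=> gm.
have [c [cc c0 c1 _]] := Hc x0 (act gm x0) 1 ltr01.
pose A := [set t : R | 0 <= t <= 1 /\ Rp (c t)].
have A0 : A 0.
  split; first by rewrite lexx ler01.
  exists 0; rewrite c0 a0; split; first by have := (dE x0 x0).2 erefl => ->; lra.
  exists 0%N; exact: wl0.
have hs : has_sup A.
  split; first by exists 0.
  by exists 1 => t [/andP[]].
set s := sup A.
have s0 : 0 <= s by apply: sup_upper_bound.
have s1 : s <= 1 by apply: ge_sup; [exists 0| move=> t [/andP[]]].
have [del del0 hdel] := cc s ltac:(by rewrite s0 s1) (D / 4) ltac:(by rewrite divr_gt0).
have [t At ht] := sup_adherent del0 hs.
rewrite -/s in ht.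
have ts : t <= s by apply: sup_upper_bound.
have Rs : Rp (c s).
  apply: prop At.2 _; apply: (lt_le_trans (hdel t _ _)).
  - by case: At.
  - rewrite ler0_norm ?subr_le0 // opprB; lra.
  - lra.
have s_eq1 : s = 1.
  apply/eqP; rewrite eq_le s1 /=; rewrite leNgt; apply/negP => slt.
  pose u := Num.min 1 (s + del / 2).
  have u1 : u <= 1 by rewrite /u ge_min lexx.
  have su : s < u by rewrite /u lt_min slt /=; lra.
  have Au : A u.
    split; first by rewrite u1 andbT; lra.
    apply: prop Rs _; rewrite dC; apply: (lt_le_trans (hdel u _ _)).
    + by rewrite u1 andbT; lra.
    + have : u <= s + del / 2 by rewrite /u ge_min lexx orbT.
      rewrite gtr0_norm ?subr_gt0 //; lra.
    + lra.
  have := sup_upper_bound hs Au; rewrite -/s; lra.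
move: Rs; rewrite s_eq1 c1 => -[g [hg fg]].
apply: step fg; rewrite dC; lra.
Qed.
Local Close Scope classical_set_scope.

Theorem lemma2p2 (R : realType) (X : Type) (d : X -> X -> R) (n : nat)
    (act : 'rV[int]_n -> X -> X) (x0 : X) (D : R)
    (gam : 'I_n -> 'rV[int]_n) (S : seq 'rV[int]_n) :
  length_space d ->
  isometric_action d act ->
  free_action act ->
  properly_discontinuous d act ->
  cocompact d act ->
  quotient_diam_le d act D ->
  let SigmaD := fun g : 'rV[int]_n => g != 0 /\ d (act g x0) x0 <= 3 * D in
  (forall i, SigmaD (gam i)) ->
  lin_indep gam ->
  coset_reps gam S ->
  0 \in S ->
  (forall s, s \in S -> forall g, in_span gam (g - s) ->
     forall k, wordlen_le SigmaD g k -> wordlen_le SigmaD s k) ->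
  let SigmaHat := fun v : 'rV[int]_n =>
    exists si, exists sj, exists sig,
      [/\ si \in S, sj \in S, SigmaD sig & v = si + sig - sj] /\
      (in_span gam v /\ v != 0) in
  forall g, in_span gam g ->
    (forall k, wordlen_le SigmaD g k -> wordlen_le SigmaHat g k) /\
    (forall k, wordlen_le SigmaHat g k ->
       wordlen_le SigmaD g ((2 * size S + 1) * k)%N).
Proof.
move=> Hl Hi Hf _ _ Hq SigmaD HgS _ Hcr H0 Hmin SigmaHat g gsp.
pose H := cr_ex Hcr.
split.
  move=> k [w [hw hP hs]].
  have := part1 Hcr H hP H0; rewrite add0r hs.
  have -> : rep H g = 0.
    by rewrite (rep_eq Hcr H (b := 0)) ?(rep_S Hcr) // subr0.
  rewrite subr0 => hg; exact: wl_mono hw hg.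
have fin : forall s, exists k, wordlen_le SigmaD s k.
  have [n0|npos] := posnP n.
    subst n => s; exists 0%N; rewrite (thinmx0 s); exists [::]; split=> //; by rewrite big_nil.
  have [[d0 dE _ _] _] := Hl.
  suff D0 : 0 < D by exact: (@gen R X d n act x0 D Hl Hi Hq D0).
  have [nz hd] := HgS (Ordinal npos).
  rewrite ltNge; apply/negP => hD.
  have : d (act (gam (Ordinal npos)) x0) x0 = 0.
    by apply/eqP; rewrite eq_le d0 andbT (le_trans hd) //; lra.
  by move/dE/Hf; apply/eqP.
have bS : forall s, s \in S -> wordlen_le SigmaD s (size S).
  move=> s sS; have [k hk] := fin s; exact: (bound Hcr H Hmin sS hk).
have letter : forall v, SigmaHat v -> wordlen_le SigmaD v (2 * size S + 1).
  move=> v; rewrite /SigmaHat => -[si [sj [sig [[siS sjS hsig ->] _]]]].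
  have -> : (2 * size S + 1 = size S + 1 + size S)%N by lia.
  apply: wl_add; first apply: wl_add; [exact: bS | apply: wl_letter; by left |].
  exact/wl_opp/bS.
move=> k [w [hw hP hs]].
rewrite -hs; apply: (wl_mono (k := ((2 * size S + 1) * size w)%N)).
  by rewrite leq_mul2l hw orbT.
apply: wl_sum => x /hP [/letter //|/letter/wl_opp]; by rewrite opprK.
Qed.
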